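(* For any tight cut $\partial(X)$ of a connected bipartite cubic graph $H$, with $H_1:=H/\overline{X}\rightarrow\overline{x}$ and $H_2:=H/X\rightarrow x$, \[\rho(H)=\rho(H_1)-\rho_{H_1}(\overline{x})+\rho(H_2)-\rho_{H_2}(x)+\rho_{H_1}(\overline{x})\,\rho_{H_2}(x).\]
   Context: Graphs are loopless but may have parallel edges. A cut $C$ of a matching covered graph is tight if $|C\cap M|=1$ for every perfect matching $M$. $H/\overline{X}\rightarrow\overline{x}$ is $H$ with $\overline{X}=V(H)-X$ shrunk to a single vertex $\overline{x}$, and $H/X\rightarrow x$ is analogous. For a connected bipartite cubic graph $H[A,B]$, a pair $(a,b)$ with $a\in A$, $b\in B$ is $\lambda$-matchable if $H$ has a spanning subgraph in which $a,b$ have degree $3$ and every other vertex degree $1$; $\rho(H)$ is the number of such pairs, and for a vertex $u$, $\rho_H(u)$ is the number of vertices $w$ such that the pair formed by $u$ and $w$ is $\lambda$-matchable. *)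

(* Defs.v *)
From HB Require Import structures.
From mathcomp Require Import all_boot all_order all_algebra.
Set Implicit Arguments. Unset Strict Implicit. Unset Printing Implicit Defensive.

Record mgraph := MGraph {
  gV : finType;
  gE : finType;
  gends : gE -> gV * gV }.

Section Graphs.
Variable G : mgraph.

Definition incident (e : gE G) (v : gV G) : bool :=
  ((gends e).1 == v) || ((gends e).2 == v).

Definition loopless : Prop := forall e : gE G, (gends e).1 != (gends e).2.

Definition deg_in (F : {set gE G}) (v : gV G) : nat :=
  #|[set e in F | incident e v]|.

Definition cubic : Prop := forall v : gV G, deg_in [set: gE G] v = 3.

Definition adj : rel (gV G) := fun u v =>
  [exists e : gE G, (gends e == (u, v)) || (gends e == (v, u))].

Definition connected : Prop := forall u v : gV G, connect adj u v.

(* A is one colour class of a bipartition: every edge has exactly one end in A *)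
Definition bipartition (A : {set gV G}) : Prop :=
  forall e : gE G, ((gends e).1 \in A) != ((gends e).2 \in A).

Definition perfect_matching (M : {set gE G}) : Prop :=
  forall v : gV G, deg_in M v = 1.

Definition cut (X : {set gV G}) : {set gE G} :=
  [set e | ((gends e).1 \in X) != ((gends e).2 \in X)].

Definition tight_cut (X : {set gV G}) : Prop :=
  forall M : {set gE G}, perfect_matching M -> #|cut X :&: M| = 1.

Definition lam_matchable (A : {set gV G}) (a b : gV G) : bool :=
  [&& a \in A, b \notin A &
   [exists F : {set gE G},
     [&& deg_in F a == 3, deg_in F b == 3 &
         [forall v, (v != a) ==> (v != b) ==> (deg_in F v == 1)]]]].

Definition rho (A : {set gV G}) : nat :=
  #|[set p : gV G * gV G | lam_matchable A p.1 p.2 ]|.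

Definition rho_at (A : {set gV G}) (u : gV G) : nat :=
  #|[set w : gV G | lam_matchable A u w || lam_matchable A w u ]|.

End Graphs.

(* G / S -> s : shrink the vertex set S to a single new vertex [None];
   vertices outside S are kept as [Some v]; edges with both ends in S are
   deleted; all other edges are kept, with ends in S redirected to [None]. *)
Definition shrink (G : mgraph) (S : {set gV G}) : mgraph :=
  @MGraph (option {v : gV G | v \notin S})
          {e : gE G | ~~ (((gends e).1 \in S) && ((gends e).2 \in S))}
          (fun e => (insub (gends (val e)).1, insub (gends (val e)).2)).

(* Main.v *)
Require Import Defs.
From HB Require Import structures.
From mathcomp Require Import all_boot all_order all_algebra.
From mathcomp Require Import zify.
Set Implicit Arguments. Unset Strict Implicit. Unset Printing Implicit Defensive.

Section Hall.
Variables (T U : finType) (r : T -> U -> bool) (u0 : U).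

Definition nbh (W : {set U}) (P : {set T}) : {set U} :=
  [set y in W | [exists x in P, r x y]].

Definition hall_cond (S : {set T}) (W : {set U}) :=
  forall P : {set T}, P \subset S -> #|P| <= #|nbh W P|.

Definition matched (S : {set T}) (W : {set U}) (f : T -> U) :=
  {in S &, injective f} /\ {in S, forall x, f x \in W /\ r x (f x)}.

Lemma nbhU (W : {set U}) (P Q : {set T}) : nbh W (P :|: Q) = nbh W P :|: nbh W Q.
Proof.
apply/setP => y; rewrite !inE; case: (y \in W) => //=.
apply/existsP/orP => [[x /andP [] /setUP [] Hx Hr]|[] /existsP [x /andP [Hx Hr]]].
- by left; apply/existsP; exists x; rewrite Hx.
- by right; apply/existsP; exists x; rewrite Hx.
- by exists x; rewrite inE Hx.
- by exists x; rewrite inE Hx orbT.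
Qed.

Lemma nbhD (W V : {set U}) (P : {set T}) : nbh (W :\: V) P = nbh W P :\: V.
Proof. by apply/setP => y; rewrite !inE; case: (y \in V); rewrite ?andbF. Qed.

Lemma hall_rec n : forall (S : {set T}) (W : {set U}), #|S| <= n -> hall_cond S W -> exists f, matched S W f.
Proof.
elim: n => [|n IH] S W.
  rewrite leqn0 cards_eq0 => /eqP -> _.
  by exists (fun _ => u0); split => x; rewrite inE.
move=> Sn HC.
case: (boolP [exists P : {set T}, [&& P \proper S, P != set0 & #|nbh W P| <= #|P|]]).
- case/existsP => P /and3P [PS P0 NP].
  have PSs : P \subset S := proper_sub PS.
  have cP : #|P| <= n by have := proper_card PS; lia.
  have [f1 [inj1 h1]] : exists f, matched P W f.
    apply: IH => // Q QP; apply: HC; exact: subset_trans QP PSs.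
  have cS2 : #|S :\: P| <= n.
    have := cardsD S P; have := subset_leq_card PSs.
    rewrite (setIidPr PSs).
    have : 0 < #|P| by rewrite card_gt0.
    lia.
  have [f2 [inj2 h2]] : exists f, matched (S :\: P) (W :\: nbh W P) f.
    apply: IH => // Q QS2.
    have QP0 : Q :&: P = set0.
      apply/setP => x; rewrite !inE; case xQ: (x \in Q) => //=.
      by have := subsetP QS2 x xQ; rewrite inE => /andP [] /negbTE.
    have := HC (Q :|: P).
    rewrite subUset PSs (subset_trans QS2 (subsetDl _ _)) => /(_ isT).
    rewrite nbhU nbhD cardsU QP0 cards0.
    have := cardsU (nbh W Q) (nbh W P).
    have := cardsD (nbh W Q) (nbh W P).
    have := subset_leq_card (subsetIr (nbh W Q) (nbh W P)).
    lia.
  exists (fun x => if x \in P then f1 x else f2 x); split.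
  + move=> x y xS yS.
    have hf1 z : z \in P -> f1 z \in nbh W P.
      move=> zP; have [h h'] := h1 z zP; rewrite inE h; apply/existsP; exists z; by rewrite zP.
    case: (boolP (x \in P)) => xP; case: (boolP (y \in P)) => yP.
    * exact: inj1.
    * move=> e; have := hf1 _ xP; rewrite e.
      have : y \in S :\: P by rewrite inE yP.
      by move/h2 => [] /setDP [] _ /negP.
    * move=> e; have := hf1 _ yP; rewrite -e.
      have : x \in S :\: P by rewrite inE xP.
      by move/h2 => [] /setDP [] _ /negP.
    * apply: inj2; by rewrite inE ?xP ?yP.
  + move=> x xS; case: (boolP (x \in P)) => xP; first exact: h1.
    have : x \in S :\: P by rewrite inE xP.
    by move/h2 => [] /setDP [] ? _ ?.
- rewrite negb_exists => /forallP Hno.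
  case: (set_0Vmem S) => [->|[x xS]].
    by exists (fun _ => u0); split => z; rewrite inE.
  have : 0 < #|nbh W [set x]|.
    by have := HC [set x]; rewrite sub1set xS cards1 => /(_ isT).
  rewrite card_gt0 => /set0Pn [y]; rewrite inE => /andP [yW /existsP [z /andP []]].
  rewrite inE => /eqP -> rxy.
  have cS2 : #|S :\ x| <= n by have := cardsD1 x S; rewrite xS; lia.
  have [f2 [inj2 h2]] : exists f, matched (S :\ x) (W :\ y) f.
    apply: IH => // Q QS.
    case: (set_0Vmem Q) => [->|[q qQ]]; first by rewrite cards0.
    have QpS : Q \proper S.
      apply/properP; split; first exact: subset_trans QS (subsetDl _ _).
      exists x => //; apply/negP => xQ; have := subsetP QS x xQ; by rewrite !inE eqxx.
    have := Hno Q; rewrite QpS /=.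
    have -> : (Q != set0) by apply/set0Pn; exists q.
    rewrite /= -ltnNge => lt.
    rewrite nbhD.
    have := cardsD1 y (nbh W Q). 
    lia.
  exists (fun z => if z == x then y else f2 z); split.
  + move=> a b aS bS.
    have fn w : w \in S -> w != x -> f2 w != y.
      move=> zS zx; have : w \in S :\ x by rewrite !inE zx zS.
      by move/h2 => [] /setD1P [] ? _ _.
    case: (eqVneq a x) => [->|ax]; case: (eqVneq b x) => [->|bx] //.
    * by move=> e; have := fn _ bS bx; rewrite -e eqxx.
    * by move=> e; have := fn _ aS ax; rewrite e eqxx.
    * apply: inj2; by rewrite !inE ?ax ?bx.
  + move=> a aS; case: (eqVneq a x) => [->|ax]; first by [].
    have : a \in S :\ x by rewrite !inE ax.
    by move/h2 => [] /setD1P [] _ ? ?.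
Qed.

Lemma hall (S : {set T}) (W : {set U}) : hall_cond S W -> exists f, matched S W f.
Proof. exact: (@hall_rec #|S|). Qed.
End Hall.

Lemma card_single (T : finType) (M : {set T}) (p : pred T) e1 :
  e1 \in M -> p e1 -> (forall e, e \in M -> p e -> e = e1) ->
  #|[set e in M | p e]| = 1.
Proof.
move=> h1 h2 h3; rewrite (_ : [set e in M | p e] = [set e1]) ?cards1 //.
apply/setP => e; rewrite !inE; apply/andP/eqP => [[]|->] //; exact: h3.
Qed.

Lemma setI_eq (T : finType) (M : {set T}) (p q : pred T) :
  p =1 q -> [set e in M | p e] = [set e in M | q e].
Proof. by move=> h; apply/setP => e; rewrite !inE h. Qed.

Section Bip.
Variable G : mgraph.
Variable A : {set gV G}.
Hypothesis hA : bipartition A.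

Definition aend (e : gE G) := if (gends e).1 \in A then (gends e).1 else (gends e).2.
Definition bend (e : gE G) := if (gends e).1 \in A then (gends e).2 else (gends e).1.

Lemma aend_in e : aend e \in A.
Proof. move: (hA e); rewrite /aend; case: ifP => // _; by case: (_ \in A). Qed.

Lemma bend_notin e : bend e \notin A.
Proof. move: (hA e); rewrite /bend; case: ifP => h; first by case: (_ \in A). move=> _; exact/negbT. Qed.

Lemma incidentE e v : incident e v = (aend e == v) || (bend e == v).
Proof. rewrite /incident /aend /bend; case: ((gends e).1 \in A) => //; by rewrite orbC. Qed.

Lemma incA e v : v \in A -> incident e v = (aend e == v).
Proof.
move=> vA; rewrite incidentE; case: (eqVneq (bend e) v) => [ev|]; last by rewrite orbF.
by have := bend_notin e; rewrite ev vA.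
Qed.

Lemma incB e v : v \notin A -> incident e v = (bend e == v).
Proof.
move=> vA; rewrite incidentE; case: (eqVneq (aend e) v) => [ev|] //=.
by have := aend_in e; rewrite ev (negbTE vA).
Qed.

Lemma sum_degA (F : {set gE G}) (P : {set gV G}) : P \subset A ->
  \sum_(v in P) deg_in F v = #|[set e in F | aend e \in P]|.
Proof.
move=> PA; rewrite -sum1_card (partition_big aend (fun v => v \in P)) /=; last first.
  by move=> e /setIdP [] _.
apply: eq_bigr => v vP; rewrite /deg_in -sum1_card; apply: eq_bigl => e.
by rewrite !inE (incA _ (subsetP PA v vP)); case: (eqVneq (aend e) v) => [->|]; rewrite ?vP ?andbT ?andbF.
Qed.

Lemma sum_degB (F : {set gE G}) (P : {set gV G}) : P \subset ~: A ->
  \sum_(v in P) deg_in F v = #|[set e in F | bend e \in P]|.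
Proof.
move=> PA; rewrite -sum1_card (partition_big bend (fun v => v \in P)) /=; last first.
  by move=> e /setIdP [] _.
apply: eq_bigr => v vP; rewrite /deg_in -sum1_card; apply: eq_bigl => e.
have vA : v \notin A by have := subsetP PA v vP; rewrite inE.
by rewrite !inE (incB _ vA); case: (eqVneq (bend e) v) => [->|]; rewrite ?vP ?andbT ?andbF.
Qed.

Hypothesis cub : cubic G.

Lemma card_edgesA (P : {set gV G}) : P \subset A ->
  #|[set e | aend e \in P]| = 3 * #|P|.
Proof.
move=> PA; rewrite (_ : [set e | aend e \in P] = [set e in [set: gE G] | aend e \in P]); last first.
  by apply/setP => e; rewrite !inE.
rewrite -sum_degA // (eq_bigr (fun _ => 3)); last by move=> v _; apply: cub.
by rewrite sum_nat_const mulnC.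
Qed.

Lemma card_edgesB (P : {set gV G}) : P \subset ~: A ->
  #|[set e | bend e \in P]| = 3 * #|P|.
Proof.
move=> PA; rewrite (_ : [set e | bend e \in P] = [set e in [set: gE G] | bend e \in P]); last first.
  by apply/setP => e; rewrite !inE.
rewrite -sum_degB // (eq_bigr (fun _ => 3)); last by move=> v _; apply: cub.
by rewrite sum_nat_const mulnC.
Qed.

Lemma cardAB : #|A| = #|~: A|.
Proof.
have h1 := card_edgesA (subxx A).
have h2 := card_edgesB (subxx (~: A)).
have e1 : [set e | aend e \in A] = setT by apply/setP => e; rewrite !inE aend_in.
have e2 : [set e | bend e \in ~: A] = setT by apply/setP => e; rewrite !inE bend_notin.
rewrite e1 in h1; rewrite e2 in h2; lia.
Qed.

Lemma pm_edge (e0 : gE G) : exists M, perfect_matching M /\ e0 \in M.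
Proof.
set a0 := aend e0; set b0 := bend e0.
pose r a b := [exists e, (aend e == a) && (bend e == b)].
set S := A :\ a0; set W := ~: A :\ b0.
have HC : hall_cond r S W.
  move=> P PS.
  have PA : P \subset A by apply: subset_trans PS (subsetDl _ _).
  set Nt := nbh r (~: A) P.
  have NtB : Nt \subset ~: A by apply/subsetP => y; rewrite inE => /andP [].
  have -> : nbh r W P = Nt :\ b0 by rewrite /W nbhD.
  have sub : [set e | aend e \in P] \subset [set e | bend e \in Nt].
    apply/subsetP => e; rewrite !inE => eP; rewrite bend_notin /=.
    by apply/existsP; exists (aend e); rewrite eP; apply/existsP; exists e; rewrite !eqxx.
  have c1 := card_edgesA PA; have c2 := card_edgesB NtB.
  have := cardsD1 b0 Nt.
  case: (boolP (b0 \in Nt)) => bN.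
  - have : [set e | aend e \in P] \proper [set e | bend e \in Nt].
      apply/properP; split => //; exists e0; first by rewrite inE.
      rewrite inE; apply/negP => a0P; have := subsetP PS _ a0P; by rewrite !inE eqxx.
    move/proper_card; lia.
  - have := subset_leq_card sub; lia.
have [f [finj fh]] := hall (aend e0) HC.
have fS : f @: S = W.
  apply/eqP; rewrite eqEcard; apply/andP; split.
    by apply/subsetP => y /imsetP [x xS ->]; case: (fh x xS).
  rewrite card_in_imset //.
  have := cardsD1 a0 A; have := cardsD1 b0 (~: A); rewrite aend_in inE bend_notin cardAB.
  rewrite /S /W; lia.
pose g a := odflt e0 [pick e | (aend e == a) && (bend e == f a)].
have gP a : a \in S -> aend (g a) = a /\ bend (g a) = f a.
  move=> aS; have [_ ] := fh a aS; rewrite /g => /existsP [e he].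
  case: pickP => [e' /andP [/eqP h1 /eqP h2] | /(_ e)]; last by rewrite he.
  by [].
exists (e0 |: [set g a | a in S]); split; last by rewrite !inE eqxx.
move=> v; rewrite /deg_in.
case: (boolP (v \in A)) => vA.
- rewrite (setI_eq _ (fun e => incA e vA)).
  case: (eqVneq v a0) => [->|va0].
  + apply: (@card_single _ _ _ e0); rewrite ?inE ?eqxx //.
    move=> e; rewrite !inE => /orP [/eqP //|/imsetP [a aS ->]].
    by have [-> _] := gP a aS => /eqP ea; move: aS; rewrite ea !inE eqxx.
  + have vS : v \in S by rewrite !inE va0.
    apply: (@card_single _ _ _ (g v)).
    * by rewrite !inE; apply/orP; right; apply/imsetP; exists v.
    * by have [-> _] := gP v vS.
    * move=> e; rewrite !inE => /orP [/eqP ->|/imsetP [a aS ->]].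
        by rewrite eq_sym (negbTE va0).
      by have [-> _] := gP a aS => /eqP ->.
- rewrite (setI_eq _ (fun e => incB e vA)).
  case: (eqVneq v b0) => [->|vb0].
  + apply: (@card_single _ _ _ e0); rewrite ?inE ?eqxx //.
    move=> e; rewrite !inE => /orP [/eqP //|/imsetP [a aS ->]].
    have [_ ->] := gP a aS => /eqP ea; have [] := fh a aS; by rewrite ea !inE eqxx.
  + have : v \in W by rewrite !inE vb0 vA.
    rewrite -fS => /imsetP [a aS ->].
    apply: (@card_single _ _ _ (g a)).
    * by rewrite !inE; apply/orP; right; apply/imsetP; exists a.
    * by have [_ ->] := gP a aS.
    * move=> e; rewrite !inE => /orP [/eqP ->|/imsetP [a' a'S ->]].
        move=> /eqP h; have [] := fh a aS; by rewrite -h !inE eqxx.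
      have [_ ->] := gP a' a'S => /eqP ea; by rewrite (finj _ _ a'S aS ea).
Qed.

End Bip.

Lemma card_disjU (T : finType) (X Y Z : {set T}) :
  (forall x, (x \in Z) = (x \in X) || (x \in Y)) -> (forall x, x \in X -> x \in Y -> False) ->
  #|Z| = #|X| + #|Y|.
Proof.
move=> hZ hd; rewrite (_ : Z = X :|: Y); last by apply/setP => x; rewrite inE hZ.
rewrite cardsU (_ : X :&: Y = set0) ?cards0 ?subn0 //.
apply/setP => x; rewrite !inE; apply/negbTE/negP => /andP [h1 h2]; exact: hd x h1 h2.
Qed.

Lemma sum_eq1 (T : finType) (P : {set T}) a : \sum_(v in P) ((v == a) : nat) = (a \in P).
Proof.
case: (boolP (a \in P)) => aP.
  rewrite (bigD1 a) //= eqxx big1 // => v /andP [_ /negbTE ->] //.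
rewrite big1 // => v vP; case: eqP => // e; by move: aP; rewrite -e vP.
Qed.

Lemma sum_ab (G : mgraph) (F : {set gE G}) a b (P : {set gV G}) :
  a != b -> deg_in F a = 3 -> deg_in F b = 3 ->
  (forall v, v != a -> v != b -> deg_in F v = 1) ->
  \sum_(v in P) deg_in F v = #|P| + 2 * (a \in P) + 2 * (b \in P).
Proof.
move=> ab ha hb ho.
rewrite (eq_bigr (fun v => 1 + 2 * (v == a) + 2 * (v == b))); last first.
  move=> v _; case: (eqVneq v a) => [->|va]; first by rewrite ha (negbTE ab).
  case: (eqVneq v b) => [->|vb]; first by rewrite hb.
  by rewrite ho.
rewrite !big_split /= sum1_card !sum_eq1 big1 //; lia.
Qed.

Section Cut.
Variable G : mgraph.
Variable A : {set gV G}.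
Hypothesis hA : bipartition A.
Hypothesis cub : cubic G.

Lemma cutE (K : {set gV G}) e : (e \in cut K) = ((aend A e \in K) != (bend A e \in K)).
Proof. rewrite inE /aend /bend; case: ifP => _ //; by rewrite eq_sym. Qed.

Lemma sumdeg_split (K : {set gV G}) (F : {set gE G}) :
  \sum_(v in K :&: A) deg_in F v + #|[set e in F :&: cut K | bend A e \in K]| =
  \sum_(v in K :\: A) deg_in F v + #|[set e in F :&: cut K | aend A e \in K]|.
Proof.
rewrite (sum_degA hA) ?subsetIr // (sum_degB hA) //; last first.
  by apply/subsetP => v; rewrite !inE => /andP [].
move: (cut K) (cutE K) => C hC.
have E1 : #|[set e in F | aend A e \in K :&: A]| = #|[set e in F | aend A e \in K]|.
  by apply: eq_card => e; rewrite !inE (aend_in hA) andbT.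
have E2 : #|[set e in F | bend A e \in K :\: A]| = #|[set e in F | bend A e \in K]|.
  by apply: eq_card => e; rewrite !inE (bend_notin hA).
have U1 : #|[set e in F | (aend A e \in K) || (bend A e \in K)]| =
   #|[set e in F | aend A e \in K]| + #|[set e in F :&: C | bend A e \in K]|.
  apply: card_disjU => e; rewrite !inE hC.
    by case: (e \in F); case: (aend A e \in K); case: (bend A e \in K).
  by case: (e \in F); case: (aend A e \in K); case: (bend A e \in K).
have U2 : #|[set e in F | (aend A e \in K) || (bend A e \in K)]| =
   #|[set e in F | bend A e \in K]| + #|[set e in F :&: C | aend A e \in K]|.
  apply: card_disjU => e; rewrite !inE hC.
    by case: (e \in F); case: (aend A e \in K); case: (bend A e \in K).
  by case: (e \in F); case: (aend A e \in K); case: (bend A e \in K).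
lia.
Qed.

Lemma pm_sum (M : {set gE G}) (P : {set gV G}) : perfect_matching M ->
  \sum_(v in P) deg_in M v = #|P|.
Proof. by move=> hM; rewrite (eq_bigr (fun _ => 1)) ?sum1_card. Qed.

Lemma single_cut (K : {set gV G}) M e : tight_cut K -> perfect_matching M ->
  e \in M -> e \in cut K -> M :&: cut K = [set e].
Proof.
move=> hK hM eM eC; have := hK M hM; move/eqP/cards1P => [e' he'].
have : e \in cut K :&: M by rewrite inE eC eM.
rewrite he' inE => /eqP ->; by rewrite setIC.
Qed.

Lemma tight_dich (K : {set gV G}) : tight_cut K ->
  (forall e, e \in cut K -> aend A e \in K) \/ (forall e, e \in cut K -> bend A e \in K).
Proof.
move=> hK.
case: (boolP [forall e, (e \in cut K) ==> (aend A e \in K)]) => h.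
  by left => e eC; move/forallP: h => /(_ e); rewrite eC.
right => e2 e2C; apply/negPn/negP => b2.
move: h; rewrite negb_forall => /existsP [e1]; rewrite negb_imply => /andP [e1C a1].
have b1 : bend A e1 \in K by move: e1C; rewrite cutE (negbTE a1); case: (_ \in K).
have a2 : aend A e2 \in K by move: e2C; rewrite cutE (negbTE b2); case: (_ \in K).
have [M1 [hM1 e1M]] := pm_edge hA cub e1.
have [M2 [hM2 e2M]] := pm_edge hA cub e2.
have := sumdeg_split K M1; rewrite (single_cut hK hM1 e1M e1C) !pm_sum //.
have -> : [set e in [set e1] | bend A e \in K] = [set e1].
  by apply/setP => e; rewrite !inE; case: eqP => // ->.
have -> : [set e in [set e1] | aend A e \in K] = set0.
  by apply/setP => e; rewrite !inE; case: eqP => // ->; rewrite (negbTE a1).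
have := sumdeg_split K M2; rewrite (single_cut hK hM2 e2M e2C) !pm_sum //.
have -> : [set e in [set e2] | aend A e \in K] = [set e2].
  by apply/setP => e; rewrite !inE; case: eqP => // ->.
have -> : [set e in [set e2] | bend A e \in K] = set0.
  by apply/setP => e; rewrite !inE; case: eqP => // ->; rewrite (negbTE b2).
rewrite !cards1 !cards0; lia.
Qed.

Lemma pm_exists (K : {set gV G}) : tight_cut K -> exists M : {set gE G}, perfect_matching M.
Proof.
move=> hK.
case: (boolP [exists e : gE G, true]) => [/existsP [e _]|].
  by have [M [hM _]] := pm_edge hA cub e; exists M.
rewrite negb_exists => /forallP hne.
case: (boolP [exists v : gV G, true]) => [/existsP [v _]|].
  have : 0 < deg_in setT v by rewrite cub.
  rewrite /deg_in card_gt0 => /set0Pn [e _].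
  by have := hne e.
rewrite negb_exists => /forallP hnv.
exists set0 => v; by have := hnv v.
Qed.

Section HK.
Variable K : {set gV G}.
Hypothesis hT : tight_cut K.
Hypothesis hK : forall e, e \in cut K -> aend A e \in K.

Lemma count_hK (F : {set gE G}) :
  \sum_(v in K :&: A) deg_in F v = \sum_(v in K :\: A) deg_in F v + #|F :&: cut K|.
Proof.
have := sumdeg_split K F.
have -> : [set e in F :&: cut K | bend A e \in K] = set0.
  apply/setP => e; rewrite [RHS]inE; apply/negbTE/negP => /setIdP [] /setIP [] _ eC bK.
  by have := hK eC; move: eC; rewrite cutE bK; case: (aend A e \in K).
have -> : [set e in F :&: cut K | aend A e \in K] = F :&: cut K.
  apply/setP => e; rewrite in_set in_setI; case eC: (e \in cut K); rewrite ?andbF //=.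
  by rewrite hK ?andbT.
by rewrite cards0 addn0.
Qed.

Lemma diff_hK : #|K :&: A| = #|K :\: A| + 1.
Proof.
have [M hM] := pm_exists hT.
have := count_hK M; rewrite !pm_sum //; have := hT hM; rewrite setIC; lia.
Qed.

Lemma cut3 : #|cut K| = 3.
Proof.
have := count_hK setT; rewrite setTI.
rewrite (eq_bigr (fun _ => 3)) ?sum_nat_const; last by move=> v _; apply: cub.
rewrite (eq_bigr (fun _ => 3)) ?sum_nat_const; last by move=> v _; apply: cub.
have := diff_hK; lia.
Qed.

End HK.
End Cut.

Lemma connect_inv (T : finType) (e : rel T) (f : T -> bool) x y :
  (forall x y, e x y -> f x = f y) -> connect e x y -> f x = f y.
Proof.
move=> h /connectP [p hp ->]; elim: p x hp => //= z p IH x /andP [hxz hp].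
by rewrite (h _ _ hxz) (IH z hp).
Qed.

Lemma bip_unique (G : mgraph) (P Q : {set gV G}) :
  connected G -> bipartition P -> bipartition Q -> P = Q \/ P = ~: Q.
Proof.
move=> hc hP hQ.
case: (boolP [exists v : gV G, true]) => [/existsP [v0 _]|]; last first.
  rewrite negb_exists => /forallP hn; left; apply/setP => v; by have := hn v.
have key v : ((v \in P) == (v \in Q)) = ((v0 \in P) == (v0 \in Q)).
  apply: esym; apply: (connect_inv (f := fun v => (v \in P) == (v \in Q))) (hc v0 v).
  move=> x y /existsP [e /orP [] /eqP he].
    move: (hP e) (hQ e); rewrite he /=.
    by case: (x \in P); case: (y \in P); case: (x \in Q); case: (y \in Q).
  move: (hP e) (hQ e); rewrite he /=.
  by case: (x \in P); case: (y \in P); case: (x \in Q); case: (y \in Q).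
case: (boolP ((v0 \in P) == (v0 \in Q))) => h.
  left; apply/setP => v; by apply/eqP; rewrite key.
right; apply/setP => v; rewrite inE; move: (key v); rewrite (negbTE h).
by case: (v \in P); case: (v \in Q).
Qed.

Definition lamF (G : mgraph) (F : {set gE G}) (a b : gV G) : bool :=
  [&& deg_in F a == 3, deg_in F b == 3 &
      [forall v, (v != a) ==> (v != b) ==> (deg_in F v == 1)]].

Lemma lamE (G : mgraph) (B : {set gV G}) a b :
  lam_matchable B a b = [&& a \in B, b \notin B & [exists F, lamF F a b]].
Proof. by []. Qed.

Lemma lamF_sym (G : mgraph) (F : {set gE G}) a b : lamF F a b = lamF F b a.
Proof.
rewrite /lamF andbA [(_ == 3) && (_ == 3)]andbC -andbA; congr (_ && (_ && _)).
apply/forallP/forallP => h v; have := h v; by case: (v != a); case: (v != b).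
Qed.

Lemma lamC (G : mgraph) (B : {set gV G}) a b :
  lam_matchable (~: B) a b = lam_matchable B b a.
Proof.
rewrite !lamE !inE negbK; case: (a \in B); case: (b \in B) => //=.
by apply/existsP/existsP => [[F h]|[F h]]; exists F; rewrite lamF_sym.
Qed.

Lemma lam_neq (G : mgraph) (B : {set gV G}) a b : lam_matchable B a b -> a != b.
Proof. rewrite lamE => /and3P [h1 h2 _]; apply/eqP => e; by move: h2; rewrite -e h1. Qed.

Lemma card_swap (T : finType) (P : pred (T * T)) :
  #|[set p | P p]| = #|[set p | P (p.2, p.1)]|.
Proof.
pose sw := fun p : T * T => (p.2, p.1).
have swK : involutive sw by case.
rewrite -(card_imset _ (inv_inj swK)); apply: eq_card => p; rewrite inE.
apply/imsetP/idP => [[q]|h]; first by rewrite inE => hq ->; case: q hq.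
by exists (sw p); rewrite ?inE ?swK //; case: p h.
Qed.

Lemma rhoC (G : mgraph) (B : {set gV G}) : rho (~: B) = rho B.
Proof.
rewrite /rho (card_swap (fun p => lam_matchable (~: B) p.1 p.2)) /=.
by apply: eq_card => p; rewrite !inE lamC.
Qed.

Lemma rho_atC (G : mgraph) (B : {set gV G}) u : rho_at (~: B) u = rho_at B u.
Proof. by rewrite /rho_at; apply: eq_card => w; rewrite !inE !lamC orbC. Qed.

Lemma rho_split (G : mgraph) (B : {set gV G}) u :
  rho B = #|[set p | lam_matchable B p.1 p.2 && (p.1 != u) && (p.2 != u)]| + rho_at B u.
Proof.
rewrite /rho -(cardsID [set p : gV G * gV G | (p.1 != u) && (p.2 != u)]).
congr (_ + _).
  by apply: eq_card => p; rewrite !inE andbA.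
pose D := [set p : gV G * gV G | lam_matchable B p.1 p.2] :\: [set p | (p.1 != u) && (p.2 != u)].
pose g := fun p : gV G * gV G => if p.1 == u then p.2 else p.1.
have hD p : p \in D -> lam_matchable B p.1 p.2 /\ (p.1 = u \/ p.2 = u).
  rewrite !inE negb_and !negbK => /andP [] /orP [] /eqP h ->; by [split; [|left]|split; [|right]].
rewrite -(@card_in_imset _ _ g D).
  apply: eq_card => w; rewrite inE; apply/imsetP/idP => [[p pD ->]|].
    have [hl [] hu] := hD p pD; rewrite /g.
      by rewrite hu eqxx; move: hl; rewrite hu => ->.
    have hne := lam_neq hl; rewrite hu in hne *; rewrite (negbTE hne).
    by move: hl; rewrite hu => ->; rewrite orbT.
  case/orP => h.
    exists (u, w); rewrite /g ?eqxx //= !inE h /= negb_and !negbK eqxx //.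
  exists (w, u); rewrite /g /=.
    by rewrite !inE h /= negb_and !negbK eqxx orbT.
  by have := lam_neq h; case: eqP.
move=> p q pD qD; rewrite /g.
have [hp [] up] := hD p pD; have [hq [] uq] := hD q qD.
- case: p up hp {pD} => p1 p2 /= ->; case: q uq hq {qD} => q1 q2 /= ->.
  by rewrite eqxx => _ _ ->.
- case: p up hp {pD} => p1 p2 /= ->; case: q uq hq {qD} => q1 q2 /= -> hp hq.
  rewrite eqxx; case: eqP => [->|] //.
    by move=> h; have := lam_neq hq; rewrite h eqxx.
  move=> _ e; subst; move: hp hq; rewrite !lamE => /and3P [h1 _ _] /and3P [_ h2 _].
  by rewrite h1 in h2.
- case: p up hp {pD} => p1 p2 /= ->; case: q uq hq {qD} => q1 q2 /= -> hp hq.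
  rewrite eqxx; case: eqP => [->|] //.
    by move=> h; have := lam_neq hp; rewrite h eqxx.
  move=> _ e; subst; move: hp hq; rewrite !lamE => /and3P [_ h2 _] /and3P [h1 _ _].
  by rewrite h1 in h2.
- case: p up hp {pD} => p1 p2 /= ->; case: q uq hq {qD} => q1 q2 /= -> hp hq.
  have := lam_neq hp; have := lam_neq hq.
  case: eqP => // _; case: eqP => // _ _ _ ->; done.
Qed.

Lemma cutC (G : mgraph) (X : {set gV G}) : cut (~: X) = cut X.
Proof. apply/setP => e; rewrite !inE; by case: (_ \in X); case: (_ \in X). Qed.

Lemma tightC (G : mgraph) (X : {set gV G}) : tight_cut (~: X) <-> tight_cut X.
Proof. by rewrite /tight_cut cutC. Qed.

Section Shrink.
Variable G : mgraph.
Variable S : {set gV G}.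

Definition phi (v : gV G) : gV (shrink S) := insub v.
Definition Ein : {set gE G} := [set e | ((gends e).1 \in S) && ((gends e).2 \in S)].
Definition L (F1 : {set gE (shrink S)}) : {set gE G} := val @: F1.
Definition R (F : {set gE G}) : {set gE (shrink S)} := [set e1 | val e1 \in F].

Lemma phiN v : (phi v == None) = (v \in S).
Proof. rewrite /phi; case: insubP => [u h _|]; first by rewrite (negbTE h). by move/negPn => ->. Qed.

Lemma phi_eq x v : v \notin S -> (phi x == phi v) = (x == v).
Proof.
move=> vS; case: (boolP (x \in S)) => xS.
  have /eqP -> : phi x == None by rewrite phiN.
  rewrite /phi (insubT (fun x => x \notin S) vS).
  by apply/esym/negbTE; apply: contra vS => /eqP <-.
rewrite /phi (insubT (fun x => x \notin S) xS) (insubT (fun x => x \notin S) vS).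
apply/eqP/eqP => [h|e]; first by have := congr1 (omap val) h; case.
by subst; congr Some; apply: val_inj; rewrite !SubK.
Qed.

Lemma phi_val (u : gV (shrink S)) : u = None \/ exists2 v, v \notin S & u = phi v.
Proof.
case: u => [u|]; last by left.
right; case: u => v vS; exists v => //; by rewrite /phi (insubT (fun x => x \notin S) vS).
Qed.

Lemma phi_inj v w : v \notin S -> phi w = phi v -> w = v.
Proof. by move=> vS /eqP; rewrite phi_eq // => /eqP. Qed.

Lemma edge_notin (e1 : gE (shrink S)) : val e1 \notin Ein.
Proof. by case: e1 => e h; rewrite inE. Qed.

Lemma inc_phi (e1 : gE (shrink S)) v : v \notin S -> incident e1 (phi v) = incident (val e1) v.
Proof. by move=> vS; rewrite /incident /= -!/(phi _) !phi_eq. Qed.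

Lemma inc_None (e1 : gE (shrink S)) : incident e1 None = (val e1 \in cut S).
Proof.
rewrite /incident /= -!/(phi _) !phiN inE; move: (edge_notin e1); rewrite inE.
by case: (_ \in S); case: (_ \in S).
Qed.

Lemma imset_filter (T U : finType) (f : T -> U) (D : {set T}) (p : pred U) :
  f @: [set x in D | p (f x)] = [set y in f @: D | p y].
Proof.
apply/setP => y; rewrite inE; apply/imsetP/andP => [[x]|[/imsetP [x xD ->] h]].
  by rewrite inE => /andP [xD h] ->; split => //; apply/imsetP; exists x.
by exists x; rewrite // inE xD.
Qed.

Lemma deg_phi (F1 : {set gE (shrink S)}) v : v \notin S ->
  deg_in F1 (phi v) = deg_in (L F1) v.
Proof.
move=> vS; rewrite /deg_in /L -imset_filter card_imset; last exact: val_inj.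
by apply: eq_card => e1; rewrite !inE inc_phi.
Qed.

Lemma deg_None (F1 : {set gE (shrink S)}) : deg_in F1 None = #|L F1 :&: cut S|.
Proof.
rewrite /deg_in /L (_ : L F1 :&: cut S = [set e in val @: F1 | e \in cut S]); last first.
  by apply/setP => e; rewrite !inE.
rewrite -imset_filter card_imset; last exact: val_inj.
by apply: eq_card => e1; rewrite !inE inc_None inE.
Qed.

Lemma L_R (F : {set gE G}) : L (R F) = F :\: Ein.
Proof.
apply/setP => e; rewrite !inE; apply/imsetP/andP => [[e1]|[eE eF]].
  by rewrite inE => h ->; split => //; move: (edge_notin e1); rewrite inE.
have h : ~~ (((gends e).1 \in S) && ((gends e).2 \in S)) by [].
exists (Sub e h : gE (shrink S)); by rewrite ?inE SubK.
Qed.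

Lemma L_notin (F1 : {set gE (shrink S)}) e : e \in L F1 -> e \notin Ein.
Proof. by case/imsetP => e1 _ ->; exact: edge_notin. Qed.

Lemma cut_notin e : e \in cut S -> e \notin Ein.
Proof. rewrite !inE; by case: (_ \in S); case: (_ \in S). Qed.

Lemma inc_S_cut e v : v \in S -> e \notin Ein -> incident e v -> e \in cut S.
Proof.
move=> vS; rewrite !inE /incident.
move: ((gends e).1) ((gends e).2) => x y.
case: (eqVneq x v) => [->|_]; case: (eqVneq y v) => [->|_] //=; rewrite ?vS //=;
by case: (x \in S).
Qed.

Lemma deg_notin (F : {set gE G}) v : v \notin S -> deg_in F v = deg_in (F :\: Ein) v.
Proof.
move=> vS; apply: eq_card => e; rewrite !inE.
case: (boolP (incident e v)); rewrite ?andbF ?andbT // /incident => /orP [] /eqP ev.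
  by rewrite ev (negbTE vS).
by rewrite ev (negbTE vS) andbF.
Qed.

Lemma deg_R_phi (F : {set gE G}) v : v \notin S -> deg_in (R F) (phi v) = deg_in F v.
Proof. by move=> vS; rewrite deg_phi // L_R -deg_notin. Qed.

Lemma deg_R_None (F : {set gE G}) : deg_in (R F) None = #|F :&: cut S|.
Proof.
rewrite deg_None L_R; apply: eq_card => e; rewrite !in_setI in_setD.
case: (boolP (e \in cut S)) => h; rewrite ?andbF ?andbT //.
by rewrite (cut_notin h).
Qed.

Definition colS (A : {set gV G}) (c : bool) : {set gV (shrink S)} :=
  [set w | if w is Some u then val u \in A else c].

Lemma colS_phi A c v : v \notin S -> (phi v \in colS A c) = (v \in A).
Proof. by move=> vS; rewrite /phi inE (insubT (fun x => x \notin S) vS) SubK. Qed.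

Lemma colS_None A c : (None \in colS A c) = c.
Proof. by rewrite inE. Qed.

Lemma colS_gen A c v : (phi v \in colS A c) = if v \in S then c else v \in A.
Proof.
case: (boolP (v \in S)) => vS; last exact: colS_phi.
by rewrite (eqP (_ : phi v == None)) ?phiN // colS_None.
Qed.

Lemma colS_bip A c : bipartition A ->
  (forall e, e \in cut S -> (aend A e \in S) = c) -> bipartition (colS A c).
Proof.
move=> hA hc e1.
have hn := edge_notin e1; have hb := hA (val e1); have h3 := hc (val e1); clear hc.
rewrite (_ : gends e1 = (phi (gends (val e1)).1, phi (gends (val e1)).2)) // !colS_gen.
move: hn hb h3; move: (val e1) => e; rewrite /aend !inE.
case: ((gends e).1 \in A); case: ((gends e).2 \in A) => //=;
case: ((gends e).1 \in S); case: ((gends e).2 \in S) => //=;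
case: c => //= _ _ /(_ isT) //.
Qed.

End Shrink.

Lemma shrink_conn (G : mgraph) (S : {set gV G}) s : s \in S -> connected G -> connected (shrink S).
Proof.
move=> sS hc.
have surj w : exists v, w = phi S v.
  case: (phi_val w) => [->|[v _ ->]]; last by exists v.
  by exists s; apply/esym/eqP; rewrite phiN.
have step (u v : gV G) : adj u v -> connect (@adj (shrink S)) (phi S u) (phi S v).
  case/existsP => e /orP [] /eqP he.
  - case: (boolP (e \in Ein S)) => hin.
      move: hin; rewrite inE he /= => /andP [uS vS].
      by rewrite (eqP (_ : phi S u == None)) ?phiN // (eqP (_ : phi S v == None)) ?phiN.
    have hin' : ~~ (((gends e).1 \in S) && ((gends e).2 \in S)) by move: hin; rewrite inE.
    apply: connect1; apply/existsP; exists (Sub e hin' : gE (shrink S)); apply/orP; left.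
    by rewrite /gends /= -!/(phi S _) he.
  - case: (boolP (e \in Ein S)) => hin.
      move: hin; rewrite inE he /= => /andP [vS uS].
      by rewrite (eqP (_ : phi S u == None)) ?phiN // (eqP (_ : phi S v == None)) ?phiN.
    have hin' : ~~ (((gends e).1 \in S) && ((gends e).2 \in S)) by move: hin; rewrite inE.
    apply: connect1; apply/existsP; exists (Sub e hin' : gE (shrink S)); apply/orP; right.
    by rewrite /gends /= -!/(phi S _) he.
move=> w1 w2; have [v1 ->] := surj w1; have [v2 ->] := surj w2.
have /connectP [p hp ->] := hc v1 v2.
elim: p v1 hp => [|z p IH] v1 /=; first by rewrite connect0.
by case/andP => h1 h2; apply: connect_trans (step _ _ h1) (IH _ h2).
Qed.

Section Inside.
Variable G : mgraph.
Variable A : {set gV G}.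
Hypothesis hA : bipartition A.
Hypothesis cub : cubic G.
Variable S : {set gV G}.
Hypothesis hT : tight_cut S.
Hypothesis hS : forall e, e \in cut S -> aend A e \notin S.

Let hTK : tight_cut (~: S). Proof. by apply/tightC. Qed.
Let hK : forall e, e \in cut (~: S) -> aend A e \in ~: S.
Proof. by move=> e; rewrite cutC => /hS; rewrite inE. Qed.

Lemma cut1_in (F : {set gE G}) (a b : gV G) : a \in A -> b \notin A -> a \notin S -> b \notin S ->
  lamF F a b -> #|F :&: cut S| = 1.
Proof.
move=> aA bA aS bS /and3P [/eqP da /eqP db /forallP ho].
have ab : a != b by apply: contraNneq bA => <-.
have ho' v : v != a -> v != b -> deg_in F v = 1 by move=> h1 h2; have := ho v; rewrite h1 h2 => /eqP.
have := count_hK hA hK F; rewrite cutC.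
rewrite !(sum_ab _ ab da db ho') !inE aA (negbTE bA) aS bS /=.
have := diff_hK hA cub hTK hK; lia.
Qed.

Lemma lam_in (a b : gV G) : a \notin S -> b \notin S ->
  lam_matchable A a b = lam_matchable (colS S A false) (phi S a) (phi S b).
Proof.
move=> aS bS; rewrite !lamE !colS_phi //.
case aA: (a \in A) => //=; case bA: (b \in A) => //=.
apply/existsP/existsP => [[F hF]|[F1 hF1]].
- exists (R S F); have c1 := cut1_in aA (negbT bA) aS bS hF.
  move: hF => /and3P [/eqP da /eqP db /forallP ho].
  rewrite /lamF !deg_R_phi // da db !eqxx /=; apply/forallP => w.
  case: (phi_val w) => [->|[v vS ->]].
    by rewrite deg_R_None c1 eqxx !implybT.
  by rewrite !phi_eq // deg_R_phi //; exact: ho v.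
- change {set gE (shrink S)} in F1.
  move: hF1 => /and3P [/eqP da /eqP db /forallP ho].
  have dN : @deg_in (shrink S) F1 None = 1.
    have := ho None; rewrite !(eq_sym None) !phiN (negbTE aS) (negbTE bS) /=; by move/eqP.
  move: dN; rewrite deg_None => /eqP /cards1P [e he].
  have : e \in L F1 :&: cut S by rewrite he inE.
  rewrite in_setI => /andP [eL eC].
  have [M [hM eM]] := pm_edge hA cub e.
  have hMC := single_cut hT hM eM eC.
  pose F := L F1 :|: (M :&: Ein S).
  have dout v : v \notin S -> deg_in F v = deg_in F1 (phi S v).
    move=> vS; rewrite (deg_notin _ vS) deg_phi //; apply: eq_card => e'.
    apply/setIdP/setIdP => [[/setDP [hF hE] hi]|[hL hi]]; split => //.
      by move: hF => /setUP [//|/setIP [_ hE']]; rewrite hE' in hE.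
    by apply/setDP; split; [apply/setUP; left | exact: L_notin hL].
  have din v : v \in S -> deg_in F v = deg_in M v.
    move=> vS; apply: eq_card => e'; apply/setIdP/setIdP => [[hF hi]|[hM' hi]]; split => //.
      move: hF => /setUP [hL|/setIP [//]].
      have eC' := inc_S_cut vS (L_notin hL) hi.
      have : e' \in L F1 :&: cut S by rewrite in_setI hL eC'.
      by rewrite he in_set1 => /eqP ->.
    case: (boolP (e' \in Ein S)) => hE; apply/setUP; [right; apply/setIP; split => // | left].
    have eC' := inc_S_cut vS hE hi.
    have : e' \in M :&: cut S by rewrite in_setI hM' eC'.
    by rewrite hMC in_set1 => /eqP ->.
  exists F; rewrite /lamF !dout // da db !eqxx /=; apply/forallP => v.
  case: (boolP (v \in S)) => vS.
    by rewrite din // hM eqxx !implybT.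
  by rewrite dout //; have := ho (phi S v); rewrite !phi_eq.
Qed.

Lemma inside_count :
  #|[set p : gV G * gV G | lam_matchable A p.1 p.2 && (p.1 \notin S) && (p.2 \notin S)]| =
  #|[set p : gV (shrink S) * gV (shrink S) |
       lam_matchable (colS S A false) p.1 p.2 && (p.1 != None) && (p.2 != None)]|.
Proof.
set D := [set p : gV G * gV G | _].
pose f := fun p : gV G * gV G => (phi S p.1, phi S p.2).
rewrite -(@card_in_imset _ _ f D).
  apply: eq_card => w; rewrite inE; apply/imsetP/idP => [[[a b]]|].
    rewrite inE /= => /andP [] /andP [hl aS bS] ->; rewrite /f /= -lam_in // hl.
    by rewrite ![phi S _ != None]negbT // phiN ?(negbTE aS) ?(negbTE bS).
  case: w => w1 w2 /= /andP [] /andP [hl h1 h2].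
  case: (phi_val w1) => [e1|[v1 v1S e1]]; first by rewrite e1 in h1.
  case: (phi_val w2) => [e2|[v2 v2S e2]]; first by rewrite e2 in h2.
  exists (v1, v2); last by rewrite /f e1 e2.
  by rewrite inE /= v1S v2S !andbT lam_in // -e1 -e2.
move=> [a b] [a' b']; rewrite !inE /= /f => /andP [] /andP [_ aS bS] /andP [] /andP [_ aS' bS'] [].
by move=> /esym /(phi_inj aS) -> /esym /(phi_inj bS) ->.
Qed.

End Inside.

Lemma notinC (T : finType) (X : {set T}) v : (v \notin ~: X) = (v \in X).
Proof. by rewrite inE negbK. Qed.

Section Cross.
Variable G : mgraph.
Variable A : {set gV G}.
Hypothesis hA : bipartition A.
Hypothesis cub : cubic G.
Variable X : {set gV G}.
Hypothesis hT : tight_cut X.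
Hypothesis hX : forall e, e \in cut X -> aend A e \in X.

Let A1 := colS (~: X) A false.
Let A2 := colS X A true.

Lemma no_rev (F : {set gE G}) a b : a \notin X -> b \in X -> a \in A -> b \notin A ->
  lamF F a b -> False.
Proof.
move=> aX bX aA bA /and3P [/eqP da /eqP db /forallP ho].
have ab : a != b by apply: contraNneq bA => <-.
have ho' v : v != a -> v != b -> deg_in F v = 1 by move=> h1 h2; have := ho v; rewrite h1 h2 => /eqP.
have := count_hK hA hX F.
rewrite !(sum_ab _ ab da db ho') !inE aA (negbTE bA) (negbTE aX) bX /=.
have := diff_hK hA cub hT hX; lia.
Qed.

Lemma cut_sub (F : {set gE G}) : #|F :&: cut X| = 3 -> cut X \subset F.
Proof.
move=> h; have h3 := cut3 hA cub hT hX.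
have : F :&: cut X = cut X by apply/eqP; rewrite eqEcard subsetIr h h3.
by move=> <-; apply: subsetIl.
Qed.

Lemma cross_eq (a b : gV G) : a \in X -> b \notin X ->
  lam_matchable A a b =
  lam_matchable A1 (phi (~: X) a) None && lam_matchable A2 None (phi X b).
Proof.
move=> aX bX.
have aX' : a \notin ~: X by rewrite notinC.
rewrite !lamE colS_phi // colS_None colS_None colS_phi //.
case aA: (a \in A) => //; case bA: (b \in A) => //=; first by rewrite andbF.
apply/existsP/andP => [[F hF]|[/existsP [F1 hF1] /existsP [F2 hF2]]].
- have ab : a != b by apply/eqP => e; move: bA; rewrite -e aA.
  move: (hF) => /and3P [/eqP da /eqP db /forallP ho].
  have ho' v : v != a -> v != b -> deg_in F v = 1 by move=> h1 h2; have := ho v; rewrite h1 h2 => /eqP.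
  have c3 : #|F :&: cut X| = 3.
    have := count_hK hA hX F.
    rewrite !(sum_ab _ ab da db ho') !inE aA bA aX (negbTE bX) /=.
    have := diff_hK hA cub hT hX; lia.
  split; apply/existsP.
  + exists (R (~: X) F); rewrite /lamF deg_R_phi // deg_R_None cutC c3 da !eqxx /=.
    apply/forallP => w; case: (phi_val w) => [->|[v vS ->]]; first by rewrite eqxx /= implybT.
    rewrite phi_eq // deg_R_phi //; apply/implyP => va; apply/implyP => _.
    by rewrite ho' //; apply/eqP => e; move: vS; rewrite e notinC (negbTE bX).
  + exists (R X F); rewrite /lamF deg_R_phi // deg_R_None c3 db !eqxx /=.
    apply/forallP => w; case: (phi_val w) => [->|[v vS ->]]; first by rewrite eqxx.
    rewrite phi_eq // deg_R_phi //; apply/implyP => _; apply/implyP => vb.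
    by rewrite ho' //; apply/eqP => e; move: vS; rewrite e aX.
- change {set gE (shrink (~: X))} in F1; change {set gE (shrink X)} in F2.
  move: hF1 => /and3P [/eqP da /eqP dN1 /forallP ho1].
  move: hF2 => /and3P [/eqP dN2 /eqP db /forallP ho2].
  rewrite deg_None cutC in dN1; rewrite deg_None in dN2.
  have s1 := cut_sub dN1; have s2 := cut_sub dN2.
  pose F := L F1 :|: L F2.
  have dX v : v \in X -> deg_in F v = deg_in F1 (phi (~: X) v).
    move=> vX; rewrite deg_phi ?notinC //; apply: eq_card => e'.
    apply/setIdP/setIdP => [[hF hi]|[hL hi]]; split => //; last by apply/setUP; left.
    move: hF => /setUP [//|hL2]; apply: (subsetP s1).
    exact: inc_S_cut vX (L_notin hL2) hi.
  have dY v : v \notin X -> deg_in F v = deg_in F2 (phi X v).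
    move=> vX; rewrite deg_phi //; apply: eq_card => e'.
    apply/setIdP/setIdP => [[hF hi]|[hL hi]]; split => //; last by apply/setUP; right.
    move: hF => /setUP [hL1|//]; apply: (subsetP s2).
    rewrite -cutC; apply: inc_S_cut (L_notin hL1) hi; by rewrite inE.
  exists F; rewrite /lamF dX // dY // da db !eqxx /=.
  apply/forallP => v; apply/implyP => va; apply/implyP => vb.
  case: (boolP (v \in X)) => vX.
    rewrite dX //; have := ho1 (phi (~: X) v).
    by rewrite phi_eq ?notinC // va /= phiN notinC vX.
  rewrite dY //; have := ho2 (phi X v).
  by rewrite phi_eq // vb phiN (negbTE vX).
Qed.

End Cross.

Lemma aendC (G : mgraph) (A : {set gV G}) e : aend (~: A) e = bend A e.
Proof. by rewrite /aend /bend inE; case: ((gends e).1 \in A). Qed.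

Lemma bipC (G : mgraph) (A : {set gV G}) : bipartition A -> bipartition (~: A).
Proof. move=> hA e; move: (hA e); rewrite !inE; by case: (_ \in A); case: (_ \in A). Qed.

Lemma swap_lamC (G : mgraph) (B : {set gV G}) (Q : pred (gV G)) :
  #|[set p | lam_matchable (~: B) p.1 p.2 && Q p.1 && Q p.2]| =
  #|[set p | lam_matchable B p.1 p.2 && Q p.1 && Q p.2]|.
Proof.
rewrite (card_swap (fun p => lam_matchable (~: B) p.1 p.2 && Q p.1 && Q p.2)) /=.
apply: eq_card => p; rewrite !inE lamC.
by case: (Q p.1); case: (Q p.2); rewrite ?andbT ?andbF.
Qed.

Lemma card_split (T : finType) (P Q : pred T) :
  #|[set x | P x]| = #|[set x | P x && Q x]| + #|[set x | P x && ~~ Q x]|.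
Proof.
rewrite -(cardsID [set x | Q x] [set x | P x]); congr (_ + _); apply: eq_card => x; by rewrite !inE // andbC.
Qed.

Section Main.
Variable G : mgraph.
Variable A : {set gV G}.
Hypothesis hA : bipartition A.
Hypothesis cub : cubic G.
Hypothesis hc : connected G.
Variable X : {set gV G}.
Hypothesis hT : tight_cut X.
Hypothesis hX : forall e, e \in cut X -> aend A e \in X.

Let C1 := colS (~: X) A false.
Let C2 := colS X A true.

Lemma cross_count :
  #|[set p | lam_matchable A p.1 p.2 && (p.1 \in X) && (p.2 \notin X)]| =
  rho_at C1 None * rho_at C2 None.
Proof.
set Sa := [set a | (a \in X) && lam_matchable C1 (phi (~: X) a) None].
set Sb := [set b | (b \notin X) && lam_matchable C2 None (phi X b)].
have -> : [set p | lam_matchable A p.1 p.2 && (p.1 \in X) && (p.2 \notin X)] = setX Sa Sb.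
  apply/setP => [[a b]]; rewrite !inE /=.
  case aX: (a \in X); case bX: (b \in X); rewrite /= ?andbF //.
  by rewrite !andbT (cross_eq hA cub hT hX aX (negbT bX)).
rewrite cardsX; congr (_ * _).
- rewrite /rho_at -(@card_in_imset _ _ (phi (~: X)) Sa).
    apply: eq_card => w; rewrite inE; apply/imsetP/idP => [[a]|].
      by rewrite inE => /andP [_ h] ->; rewrite h orbT.
    have -> : lam_matchable C1 None w = false by rewrite lamE colS_None.
    move=> /= h; case: (phi_val w) => [e|[v vS e]].
      by have := lam_neq h; rewrite e eqxx.
    by exists v; rewrite // inE -notinC vS -e h.
  move=> a b; rewrite !inE => /andP [aX _] /andP [bX _] h.
  by apply: (phi_inj _ h); rewrite notinC.
- rewrite /rho_at -(@card_in_imset _ _ (phi X) Sb).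
    apply: eq_card => w; rewrite inE; apply/imsetP/idP => [[a]|].
      by rewrite inE => /andP [_ h] ->; rewrite h.
    have -> : lam_matchable C2 w None = false by rewrite lamE colS_None andbF.
    move=> /=; rewrite orbF => h; case: (phi_val w) => [e|[v vS e]].
      by have := lam_neq h; rewrite e eqxx.
    by exists v; rewrite // inE vS -e h.
  move=> a b; rewrite !inE => /andP [aX _] /andP [bX _] h.
  by apply: (phi_inj _ h).
Qed.

Lemma rev_count :
  #|[set p | lam_matchable A p.1 p.2 && (p.1 \notin X) && (p.2 \in X)]| = 0.
Proof.
apply/eqP; rewrite cards_eq0; apply/eqP/setP => [[a b]]; rewrite !inE /=.
apply/negbTE/negP => /andP [] /andP []; rewrite lamE => /and3P [aA bA /existsP [F hF]] aX bX.
exact: (no_rev hA cub hT hX aX bX aA bA hF).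
Qed.

Import GRing.Theory Num.Theory.
Local Open Scope ring_scope.

Lemma main_formula (A1 : {set gV (shrink (~: X))}) (A2 : {set gV (shrink X)}) :
  bipartition A1 -> bipartition A2 ->
  (rho A)%:Z =
    (rho A1)%:Z - (rho_at A1 None)%:Z + (rho A2)%:Z - (rho_at A2 None)%:Z
    + (rho_at A1 None)%:Z * (rho_at A2 None)%:Z.
Proof.
move=> hA1 hA2.
have [M hM] := pm_exists hA cub hT.
have : (0 < #|cut X :&: M|)%N by rewrite (hT hM).
rewrite card_gt0 => /set0Pn [e0]; rewrite in_setI => /andP [e0C _].
have x0X := hX e0C.
have y0X : bend A e0 \notin X by move: e0C; rewrite (cutE A) x0X; case: (_ \in X).
have hC1 : bipartition C1.
  apply: colS_bip => // e; rewrite cutC => /hX; by rewrite inE => ->.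
have hC2 : bipartition C2 by apply: colS_bip => // e /hX.
have conn1 : connected (shrink (~: X)).
  by apply: (@shrink_conn _ _ (bend A e0)); rewrite ?inE.
have conn2 : connected (shrink X) by apply: (@shrink_conn _ _ (aend A e0)).
have [r1 ra1] : rho A1 = rho C1 /\ rho_at A1 None = rho_at C1 None.
  by case: (bip_unique conn1 hA1 hC1) => ->; rewrite ?rhoC ?rho_atC.
have [r2 ra2] : rho A2 = rho C2 /\ rho_at A2 None = rho_at C2 None.
  by case: (bip_unique conn2 hA2 hC2) => ->; rewrite ?rhoC ?rho_atC.
rewrite r1 ra1 r2 ra2.
have s1 := rho_split C1 None.
have s2 := rho_split C2 None.
have sA := card_split (fun p => lam_matchable A p.1 p.2) (fun p => p.1 \in X).
rewrite (card_split (fun p => lam_matchable A p.1 p.2 && (p.1 \in X)) (fun p => p.2 \in X)) in sA.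
rewrite (card_split (fun p => lam_matchable A p.1 p.2 && ~~ (p.1 \in X)) (fun p => p.2 \in X)) in sA.
rewrite -/(rho A) in sA.
have XX : #|[set x | lam_matchable A x.1 x.2 && (x.1 \in X) && (x.2 \in X)]| =
          #|[set p | lam_matchable C1 p.1 p.2 && (p.1 != None) && (p.2 != None)]|.
  have hTX : tight_cut (~: X) by apply/tightC.
  have hSX : forall e, e \in cut (~: X) -> aend A e \notin ~: X.
    by move=> e; rewrite cutC => /hX; rewrite inE negbK.
  rewrite -(inside_count hA cub hTX hSX).
  by apply: eq_card => p; rewrite !inE !negbK.
have YY : #|[set x | lam_matchable A x.1 x.2 && ~~ (x.1 \in X) && ~~ (x.2 \in X)]| =
          #|[set p | lam_matchable C2 p.1 p.2 && (p.1 != None) && (p.2 != None)]|.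
  rewrite -(swap_lamC A (fun v => v \notin X)).
  have hSX : forall e, e \in cut X -> aend (~: A) e \notin X.
    move=> e eC; rewrite aendC; have h := hX eC; move: eC; rewrite (cutE A) h.
    by case: (_ \in X).
  rewrite (inside_count (bipC hA) cub hT hSX).
  rewrite -(swap_lamC C2 (fun w => w != None)).
  have -> : colS X (~: A) false = ~: C2.
    by apply/setP => w; case: w => [u|]; rewrite !inE.
  by [].
have XY := cross_count.
have YX := rev_count.
rewrite XY YX XX YY in sA.
rewrite sA s1 s2; lia.
Qed.

End Main.

Import GRing.Theory Num.Theory.
Local Open Scope ring_scope.

Theorem corollary2p7 (H : mgraph) (A X : {set gV H}) :
  loopless H -> connected H -> cubic H -> bipartition A ->
  tight_cut X ->
  forall A1 : {set gV (shrink (~: X))}, bipartition A1 ->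
  forall A2 : {set gV (shrink X)}, bipartition A2 ->
  (rho A)%:Z =
    (rho A1)%:Z - (rho_at A1 None)%:Z + (rho A2)%:Z - (rho_at A2 None)%:Z
    + (rho_at A1 None)%:Z * (rho_at A2 None)%:Z.
Proof.
move=> _ hc cub hA hT A1 hA1 A2 hA2.
case: (tight_dich hA cub hT) => hX.
  exact: main_formula.
rewrite -rhoC; apply: (main_formula (bipC hA)) => // e eC; rewrite aendC; exact: hX.
Qed.
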